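(* Let $(\mathbb{X},d)$ be a geodesic metric space and let $\varrho$ be a continuous admissible radius function in a bounded domain $\Omega\subset\mathbb{X}$. Let $u\in C(\overline\Omega)$ and let $K\subset\Omega$ be compact. If $\omega$ is a concave modulus of continuity for $u$ on $\widetilde K$ (i.e. $|u(s)-u(t)|\le\omega(d(s,t))$ for all $s,t\in\widetilde K$), then for all $x,y\in K$, $$|\mathcal{S}u(x)-\mathcal{S}u(y)|\leq\omega\left(\widehat\omega_\varrho(d(x,y))\right).$$
   Context: A metric space is geodesic if any two points $x,y$ are joined by a curve of length $d(x,y)$. An admissible radius function in $\Omega$ is $\varrho\in C(\overline\Omega)$, $\varrho\ge0$, with $0<\varrho(x)\leq\mathrm{dist}(x,\partial\Omega)$ for $x\in\Omega$ and $\varrho=0$ exactly on $\partial\Omega$. $B_x=\overline{B}(x,\varrho(x))$, $\widetilde K=\bigcup_{x\in K}B_x$, and $\mathcal{S}u(x)=\frac12(\sup_{B_x}u+\inf_{B_x}u)$. A modulus of continuity is a nondecreasing continuous $\omega:[0,\mathrm{diam}\,\Omega]\to[0,\infty)$ with $\omega(0)=0$. Fix a concave modulus of continuity $\omega_{\varrho,\Omega}$ for $\varrho$ on $\Omega$ with $\omega_{\varrho,\Omega}(\mathrm{diam}\,\Omega)\le\mathrm{diam}\,\Omega$; set $\widehat\omega_\varrho(t)=t$ if $\omega_{\varrho,\Omega}(t)\le t$ for all $t\in[0,\mathrm{diam}\,\Omega]$, and otherwise $\widehat\omega_\varrho(t)=\frac{\mathrm{diam}\,\Omega}{\omega_{\varrho,\Omega}(\mathrm{diam}\,\Omega)}\omega_{\varrho,\Omega}(t)$.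 *)

(* Defs.v *)
From HB Require Import structures.
From mathcomp Require Import all_boot all_order all_algebra.
From mathcomp Require Import boolp classical_sets reals constructive_ereal ereal.
Set Implicit Arguments. Unset Strict Implicit. Unset Printing Implicit Defensive.
Import Order.TTheory GRing.Theory Num.Theory.
Local Open Scope classical_set_scope.
Local Open Scope ring_scope.

Section MetricDefs.
Variables (R : realType) (X : Type) (d : X -> X -> R).

Definition is_metric : Prop :=
  [/\ (forall x y, 0 <= d x y), (forall x y, d x y = 0 <-> x = y),
      (forall x y, d x y = d y x) & (forall x y z, d x z <= d x y + d y z)].

Definition open_set (A : set X) : Prop :=
  forall x, A x -> exists2 e : R, 0 < e & forall y, d x y < e -> A y.

Definition mclosure (A : set X) : set X :=
  [set x | forall e : R, 0 < e -> exists2 a, A a & d x a < e].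

Definition mboundary (A : set X) : set X := mclosure A `&` mclosure (~` A).

Definition connected_set (A : set X) : Prop :=
  forall U V : set X, open_set U -> open_set V -> A `<=` U `|` V ->
    A `&` U !=set0 -> A `&` V !=set0 -> A `&` U `&` V !=set0.

Definition bounded_set (A : set X) : Prop :=
  exists M : R, forall x y, A x -> A y -> d x y <= M.

Definition domain (A : set X) : Prop :=
  [/\ A !=set0, open_set A & connected_set A].

(* sequential compactness (equivalent to compactness in metric spaces) *)
Definition seq_lim (s : nat -> X) (l : X) : Prop :=
  forall e : R, 0 < e -> exists N, forall n, (N <= n)%N -> d (s n) l < e.

Definition compact_set (K : set X) : Prop :=
  forall s : nat -> X, (forall n, K (s n)) ->
    exists (phi : nat -> nat) (l : X),
      (forall n m, (n < m)%N -> (phi n < phi m)%N) /\ K l /\ seq_lim (s \o phi) l.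

Definition diam (A : set X) : R := sup [set d x y | x in A & y in A].

Definition continuous_on (A : set X) (f : X -> R) : Prop :=
  forall x, A x -> forall e : R, 0 < e -> exists2 del : R, 0 < del &
    forall y, A y -> d x y < del -> `|f x - f y| < e.

Definition curve_continuous_on (I : set R) (g : R -> X) : Prop :=
  forall t, I t -> forall e : R, 0 < e -> exists2 del : R, 0 < del &
    forall s, I s -> `|t - s| < del -> d (g t) (g s) < e.

Definition curve_length (g : R -> X) (a b : R) : \bar R :=
  ereal_sup [set L : \bar R | exists (n : nat) (t : nat -> R),
     [/\ t 0%N = a, t n = b, (forall i, (i < n)%N -> t i <= t i.+1) &
         L = (\sum_(i < n) d (g (t i)) (g (t i.+1)))%:E]].

Definition geodesic_space : Prop :=
  forall x y, exists g : R -> X,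
    [/\ curve_continuous_on [set t | 0 <= t <= 1] g, g 0 = x, g 1 = y &
        curve_length g 0 1 = (d x y)%:E].

Definition admissible_radius (Om : set X) (rho : X -> R) : Prop :=
  [/\ continuous_on (mclosure Om) rho,
      (forall x, mclosure Om x -> 0 <= rho x),
      (forall x, Om x -> 0 < rho x /\ forall z, mboundary Om z -> rho x <= d x z)
    & (forall x, mclosure Om x -> (rho x = 0 <-> mboundary Om x))].

Definition cball (x : X) (r : R) : set X := [set z | d x z <= r].

Definition Bx (rho : X -> R) (x : X) : set X := cball x (rho x).

Definition tilde (rho : X -> R) (K : set X) : set X :=
  [set z | exists2 x, K x & Bx rho x z].

Definition Sop (rho : X -> R) (u : X -> R) (x : X) : R :=
  (sup [set u z | z in Bx rho x] + inf [set u z | z in Bx rho x]) / 2.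

Definition modulus_for (A : set X) (g : X -> R) (om : R -> R) : Prop :=
  forall s t, A s -> A t -> `|g s - g t| <= om (d s t).

End MetricDefs.

Section Moduli.
Variable R : realType.

Definition modulus (D : R) (om : R -> R) : Prop :=
  [/\ (forall s t, 0 <= s -> s <= t -> t <= D -> om s <= om t),
      (forall t, 0 <= t <= D -> forall e : R, 0 < e -> exists2 del : R, 0 < del &
          forall s, 0 <= s <= D -> `|t - s| < del -> `|om t - om s| < e),
      om 0 = 0 &
      (forall t, 0 <= t <= D -> 0 <= om t)].

Definition concave_on (D : R) (om : R -> R) : Prop :=
  forall s t l : R, 0 <= s <= D -> 0 <= t <= D -> 0 <= l <= 1 ->
    l * om s + (1 - l) * om t <= om (l * s + (1 - l) * t).

Definition omega_hat (D : R) (om_rho : R -> R) (t : R) : R :=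
  if `[< forall s, 0 <= s <= D -> om_rho s <= s >] then t
  else D / om_rho D * om_rho t.

End Moduli.

(* Main.v *)
Require Import Defs.
From HB Require Import structures.
From mathcomp Require Import all_boot all_order all_algebra.
From mathcomp Require Import boolp classical_sets reals constructive_ereal ereal.
From mathcomp Require Import ring lra.
Import Order.TTheory GRing.Theory Num.Theory.
Local Open Scope classical_set_scope.
Local Open Scope ring_scope.

Lemma le_eps (R : realType) (x y : R) :
  (forall e, 0 < e -> x <= y + e) -> x <= y.
Proof.
move=> H; rewrite leNgt; apply/negP => Hlt.
have := H ((x - y) / 2) ltac:(lra). lra.
Qed.

Lemma geo_split (R : realType) (X : Type) (d : X -> X -> R) x y (g : R -> X) s :
  curve_length d g 0 1 = (d x y)%:E -> g 0 = x -> g 1 = y -> 0 <= s <= 1 ->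
  d x (g s) + d (g s) y <= d x y.
Proof.
move=> Hl H0 H1 /andP[s0 s1].
rewrite -lee_fin -Hl; apply: ereal_sup_ubound.
exists 2%N, (fun i => if i == 0%N then 0 else if i == 1%N then s else 1).
split => //.
- by case=> [|[|[|i]]] //= _; rewrite ?lexx.
- by rewrite !big_ord_recr big_ord0 /= add0r H0 H1.
Qed.

Lemma cross (R : realType) (X : Type) (d : X -> X -> R) (g : R -> X) (P : X -> Prop) T :
  curve_continuous_on d [set t | 0 <= t <= 1] g -> P (g 0) ->
  T = sup [set t | (0 <= t <= 1) /\ P (g t)] ->
  [/\ 0 <= T <= 1,
      (forall e, 0 < e -> exists s, [/\ 0 <= s <= 1, P (g s) & d (g T) (g s) < e]) &
      (T = 1 \/ forall e, 0 < e -> exists s, [/\ 0 <= s <= 1, ~ P (g s) & d (g T) (g s) < e])].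
Proof.
move=> Hc P0 ->; set S := [set t | _].
have hS : has_sup S.
  split; first by exists 0; split => //; rewrite lexx ler01.
  by exists 1 => t [/andP[_ ->]].
have S0 : S 0 by split => //; rewrite lexx ler01.
have T0 : 0 <= sup S by apply: sup_upper_bound.
have T1 : sup S <= 1.
  by apply: ge_sup; [case: hS | move=> t [/andP[_ ->]]].
have TI : 0 <= sup S <= 1 by rewrite T0 T1.
split => //.
- move=> e e0; have [del del0 Hdel] := Hc _ TI e e0.
  have [s [Is Ps] Hs] := sup_adherent del0 hS.
  have sT : s <= sup S by apply: sup_upper_bound.
  exists s; split => //; apply: Hdel => //.
  rewrite ger0_norm; lra.
- have [->|Tlt] := eqVneq (sup S) 1; first by left.
  right => e e0; have [del del0 Hdel] := Hc _ TI e e0.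
  have Tl : sup S < 1 by rewrite lt_neqAle Tlt T1.
  have [t [It tT tdel]] : exists t, [/\ 0 <= t <= 1, sup S < t & t - sup S < del].
    have [h|h] := lerP (sup S + del / 2) 1.
      exists (sup S + del / 2); split; try lra.
    exists 1; split; try lra.
  exists t; split => //.
    move=> Pt; have : t <= sup S by apply: sup_upper_bound.
    lra.
  apply: Hdel => //; rewrite ltr0_norm; lra.
Qed.
Arguments cross {R X d g P T}.
Arguments geo_split {R X d x y g s}.

Lemma clos_sub (R : realType) (X : Type) (d : X -> X -> R) (Om : set X) :
  is_metric d -> Om `<=` mclosure d Om.
Proof. by case=> _ deq _ _ x Ox e e0; exists x => //; rewrite (proj2 (deq x x)). Qed.

Arguments clos_sub {R X d Om}.

Lemma diam_clos (R : realType) (X : Type) (d : X -> X -> R) (Om : set X) a b :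
  is_metric d -> bounded_set d Om -> mclosure d Om a -> mclosure d Om b ->
  d a b <= diam d Om.
Proof.
move=> Hm [M HM] Ca Cb; have [dge0 deq dsym dtri] := Hm.
apply: le_eps => e e0.
have [a' Oa' ha] := Ca (e/2) ltac:(lra).
have [b' Ob' hb] := Cb (e/2) ltac:(lra).
have hs : has_sup [set d x y | x in Om & y in Om].
  split; first by exists (d a' b'); exists a' => //; exists b'.
  by exists M => _ [x Ox [y Oy <-]]; apply: HM.
have : d a' b' <= diam d Om.
  by apply: sup_upper_bound => //; exists a' => //; exists b'.
have := dtri a a' b; have := dtri a' b' b; rewrite (dsym b' b). lra.
Qed.

Arguments diam_clos {R X d Om a b}.

Lemma proj (R : realType) (X : Type) (d : X -> X -> R) y z r :
  is_metric d -> geodesic_space d -> 0 <= r ->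
  exists z', d y z' <= r /\ (d z' z <= 0 \/ d z' z <= d y z - r).
Proof.
move=> Hm Hg r0; have [dge0 deq dsym dtri] := Hm.
have [yz|yz] := lerP (d y z) r.
  by exists z; split => //; left; rewrite (proj2 (deq z z)).
have [g [gc g0 g1 gl]] := Hg y z.
have P0 : (fun w => d y w <= r) (g 0) by rewrite /= g0 (proj2 (deq y y)).
have [/andP[T0 T1] H1 H2] := @cross _ _ d g (fun w => d y w <= r) _ gc P0 erefl.
set T := sup _ in T0 T1 H1 H2.
have hT : d y (g T) <= r.
  apply: le_eps => e e0; have [s [_ Ps ds]] := H1 e e0.
  have := dtri y (g s) (g T); rewrite (dsym (g s)); lra.
exists (g T); split => //.
case: H2 => [TE|H2].
  by left; rewrite TE g1 (proj2 (deq z z)).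
right.
have hT' : r <= d y (g T).
  apply: le_eps => e e0; have [s [_ Ps ds]] := H2 e e0.
  have := dtri y (g T) (g s); move/negP: Ps; rewrite -ltNge; lra.
have := geo_split gl g0 g1 (s := T) ltac:(by rewrite T0 T1). lra.
Qed.

Arguments proj {R X d} y z {r}.

Lemma ball_clos (R : realType) (X : Type) (d : X -> X -> R) (Om : set X) rho x z :
  is_metric d -> geodesic_space d -> admissible_radius d Om rho -> Om x ->
  d x z <= rho x -> mclosure d Om z.
Proof.
move=> Hm Hg [_ _ Had _] Ox xz; have [dge0 deq dsym dtri] := Hm.
have [//|Hz] := pselect (mclosure d Om z).
have [g [gc g0 g1 gl]] := Hg x z.
have P0 : Om (g 0) by rewrite g0.
have [/andP[T0 T1] H1 H2] := cross gc P0 erefl.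
set T := sup _ in T0 T1 H1 H2.
have Cb : mclosure d Om (g T).
  by move=> e e0; have [s [_ Ps ds]] := H1 e e0; exists (g s).
have Bb : mboundary d Om (g T).
  split => //; case: H2 => [TE|H2].
    rewrite TE g1 => e e0; exists z; last by rewrite (proj2 (deq z z)).
    by move=> Oz; apply: Hz; apply: clos_sub.
  by move=> e e0; have [s [_ Ps ds]] := H2 e e0; exists (g s).
have := (Had x Ox).2 _ Bb.
have := geo_split gl g0 g1 (s := T) ltac:(by rewrite T0 T1).
have := dge0 (g T) z => h1 h2 h3.
have : d (g T) z = 0 by apply/eqP; rewrite eq_le; apply/andP; split; lra.
by move/deq => <-.
Qed.

Arguments ball_clos {R X d Om rho x z}.

Lemma hat_bounds (R : realType) (D : R) omr t :
  modulus D omr -> concave_on D omr -> omr D <= D -> 0 <= t <= D ->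
  [/\ t <= omega_hat D omr t, omr t <= omega_hat D omr t & omega_hat D omr t <= D].
Proof.
move=> [mono _ om0 omp] conc omD /andP[t0 tD].
have omt := omp t ltac:(by rewrite t0 tD).
rewrite /omega_hat; case: asboolP => H.
  by split => //; apply: H; rewrite t0 tD.
have [s [/andP[s0 sD] ss]] : exists s, (0 <= s <= D) /\ s < omr s.
  have [//|Hn] := pselect (exists s, (0 <= s <= D) /\ s < omr s).
  exfalso; apply: H => s Hs; rewrite leNgt; apply/negP => lt; apply: Hn; exists s; split => //.
have omsD := mono s D s0 sD (lexx D).
have D0 : 0 < D by lra.
have oD0 : 0 < omr D by lra.
have tD0 : 0 <= t / D <= 1.
  by apply/andP; split; [rewrite divr_ge0 // ltW | rewrite ler_pdivrMr // mul1r].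
have hc := conc D 0 (t / D) ltac:(rewrite lexx; lra) ltac:(rewrite lexx; lra) tD0.
rewrite om0 !mulr0 !addr0 mulfVK ?gt_eqF // in hc.
set c := D / omr D.
have cD : c * omr D = D by rewrite /c mulfVK ?gt_eqF.
have tE : t / D * D = t by rewrite mulfVK ?gt_eqF.
have a1 : 1 <= c by rewrite /c ler_pdivlMr // mul1r.
have omtD := mono t D t0 tD (lexx D).
split.
- have : c * (t / D * omr D) <= c * omr t by apply: ler_wpM2l; lra.
  by rewrite mulrCA cD tE.
- nra.
- have : c * omr t <= c * omr D by apply: ler_wpM2l; lra.
  by rewrite cD.
Qed.

Arguments hat_bounds {R D omr t}.

Theorem lemma3p12 (R : realType) (X : Type) (d : X -> X -> R)
  (Om : set X) (rho : X -> R) (om_rho : R -> R) (u : X -> R)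
  (K : set X) (om : R -> R) :
  is_metric d -> geodesic_space d ->
  domain d Om -> bounded_set d Om ->
  admissible_radius d Om rho ->
  modulus (diam d Om) om_rho -> concave_on (diam d Om) om_rho ->
  modulus_for d Om rho om_rho -> om_rho (diam d Om) <= diam d Om ->
  continuous_on d (mclosure d Om) u ->
  K `<=` Om -> compact_set d K ->
  modulus (diam d Om) om -> concave_on (diam d Om) om ->
  modulus_for d (tilde d rho K) u om ->
  forall x y, K x -> K y ->
    `|Sop d rho u x - Sop d rho u y| <= om (omega_hat (diam d Om) om_rho (d x y)).
Proof.
move=> Hm Hg _ Hbd Had Hmr Hcr Hmfr Hrd _ HK _ Hmo Hco Hmf.
have [dge0 deq dsym dtri] := Hm.
set D := diam d Om.
have [mono _ om0 omp] := Hmo.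
have [_ rho0 Hpos _] := Had.
have inB : forall p, K p -> Bx d rho p p.
  by move=> p Kp; rewrite /Bx /cball /= (proj2 (deq p p)) //; apply: rho0; apply: (clos_sub Hm _ (HK _ Kp)).
have inT : forall p z, K p -> Bx d rho p z -> tilde d rho K z.
  by move=> p z Kp Bz; exists p.
have inC : forall p z, K p -> Bx d rho p z -> mclosure d Om z.
  by move=> p z Kp Bz; apply: (ball_clos Hm Hg Had (HK _ Kp)).
have Hu : forall s t, tilde d rho K s -> tilde d rho K t -> mclosure d Om s ->
    mclosure d Om t -> u s - u t <= om (d s t) /\ d s t <= D.
  move=> s t Ts Tt Cs Ct; have := Hmf s t Ts Tt; rewrite ler_norml => /andP[_ h].
  by split => //; apply: diam_clos.
have hsi : forall p, K p -> has_sup [set u z | z in Bx d rho p] /\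
                           has_inf [set u z | z in Bx d rho p].
  move=> p Kp.
  have bd : forall z, Bx d rho p z -> u p - om D <= u z <= u p + om D.
    move=> z Bz.
    have [h1 h2] := Hu z p (inT _ _ Kp Bz) (inT _ _ Kp (inB _ Kp)) (inC _ _ Kp Bz)
       (inC _ _ Kp (inB _ Kp)).
    have [h3 h4] := Hu p z (inT _ _ Kp (inB _ Kp)) (inT _ _ Kp Bz) (inC _ _ Kp (inB _ Kp))
       (inC _ _ Kp Bz).
    have := mono _ _ (dge0 z p) h2 (lexx D).
    have := mono _ _ (dge0 p z) h4 (lexx D).
    lra.
  split; (split; first by exists (u p); exists p => //; apply: inB).
    by exists (u p + om D) => _ [z Bz <-]; have := bd z Bz; lra.
  by exists (u p - om D) => _ [z Bz <-]; have := bd z Bz; lra.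
have key : forall x y, K x -> K y ->
    Sop d rho u x - Sop d rho u y <= om (omega_hat D om_rho (d x y)).
  move=> x y Kx Ky.
  have d0D : d x y <= D.
    by apply: diam_clos => //; apply: (clos_sub Hm); apply: HK.
  have [hb1 hb2 hb3] := hat_bounds Hmr Hcr Hrd ltac:(by apply/andP; split; [apply: dge0 | exact: d0D]).
  set m := omega_hat D om_rho (d x y) in hb1 hb2 hb3 *.
  have := Hmfr x y (HK _ Kx) (HK _ Ky); rewrite ler_norml => /andP[hr1 hr2].
  have [[sx ix] [sy iy]] := (hsi x Kx, hsi y Ky).
  rewrite /Sop.
  set Sx := sup _; set Ix := inf _; set Sy := sup _; set Iy := inf _.
  suff : Sx + Ix - Sy - Iy <= 2 * om m by lra.
  apply: le_eps => e e0.
  have [_ [z Bz <-] hz] := sup_adherent (eps := e / 2) ltac:(lra) sx.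
  have [_ [w Bw <-] hw] := inf_adherent (eps := e / 2) ltac:(lra) iy.
  have [z' [Bz' hz']] := proj y z (r := rho y) Hm Hg (rho0 _ (clos_sub Hm _ (HK _ Ky))).
  have [w' [Bw' hw']] := proj x w (r := rho x) Hm Hg (rho0 _ (clos_sub Hm _ (HK _ Kx))).
  have Sy' : u z' <= Sy by apply: sup_upper_bound => //; exists z'.
  have Ix' : Ix <= u w' by apply: ge_inf; [case: ix | exists w'].
  have [ha aD] := Hu z z' (inT _ _ Kx Bz) (inT _ _ Ky Bz') (inC _ _ Kx Bz) (inC _ _ Ky Bz').
  have [hb bD] := Hu w' w (inT _ _ Kx Bw') (inT _ _ Ky Bw) (inC _ _ Kx Bw') (inC _ _ Ky Bw).
  have dyz := dtri y x z; have dxw := dtri x y w.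
  rewrite /Bx /cball /= in Bz Bw.
  rewrite (dsym z' z) in hz'; rewrite -/Sx in hz; rewrite -/Iy in hw.
  set a := d z z' in ha aD hz'; set b := d w' w in hb bD hw'.
  have a0 : 0 <= a := dge0 _ _.
  have b0 : 0 <= b := dge0 _ _.
  have ab : (a + b) / 2 <= m.
    rewrite (dsym y x) in dyz.
    case: hz' => ?; case: hw' => ?; lra.
  have hc := Hco a b (1/2) ltac:(by rewrite a0 aD) ltac:(by rewrite b0 bD)
    ltac:(apply/andP; split; lra).
  have E : 1 / 2 * a + (1 - 1 / 2) * b = (a + b) / 2 by field.
  rewrite E in hc.
  have := mono ((a + b) / 2) m ltac:(lra) ab hb3.
  lra.
move=> x y Kx Ky; rewrite ler_norml; apply/andP; split.
  by rewrite lerNl opprB dsym; apply: key.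
exact: key.
Qed.
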